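(* Let $H=(W,F)$ be a simple undirected graph with a designated root $r_1\in W$ and a set of terminals $S=\{s_1,\dots,s_k\}\subseteq W\setminus\{r_1\}$ with $k\ge 2$, such that no edge of $H$ joins two terminals. Let $H'$, $H'_1$, $H'_2$, $M_1$, $M_2$ and $g$ be as defined in the context. Then for every $S$-wide spanning tree $T$ of $H$ there exists a set $J\subseteq F'$ that is a basis of both $M_1$ and $M_2$ with $g(J)=T$.
   Context: A spanning tree $T$ of $H$ is $S$-wide if every connected component of $T-r_1$ contains at most one terminal. $H'=(W',F')$ is obtained from $H$ by adding $k-1$ new vertices $r_2,\dots,r_k$ and, for each edge $r_1x\in F$ and each $i\in\{2,\dots,k\}$, a new edge $r_ix$. $H'_1$ is the multigraph obtained from $H'$ by identifying $r_1,\dots,r_k$ into a single vertex (keeping parallel edges), and $H'_2$ is the multigraph obtained from $H'$ by identifying $s_1,\dots,s_k$ into a single vertex (keeping parallel edges and loops); both have edge set $F'$. $M_1$ and $M_2$ are the graphic matroids of $H'_1$ and $H'_2$ on ground set $F'$. Define $f:F'\to F$ by $f(xy)=r_1y$ if $x\in\{r_1,\dots,r_k\}$, $f(xy)=xr_1$ if $y\in\{r_1,\dots,r_k\}$, and $f(xy)=xy$ otherwise; for $J\subseteq F'$, $g(J)=\{f(e):e\in J\}$ (an edge set of $H$). *)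

(* Defs.v *)
From mathcomp Require Import all_boot.
Set Implicit Arguments. Unset Strict Implicit. Unset Printing Implicit Defensive.

(* Multigraphs: an edge type E, a vertex type V, and an endpoint map
   ends : E -> V * V (loops allowed: ends e = (x, x)).  A set X : {set E}
   of edges is the edge set of the (multi)graph considered. *)
Section MultiGraph.
Variables (E V : finType) (ends : E -> V * V).

Definition mstep (X : {set E}) : rel V :=
  fun x y => [exists e in X, (ends e == (x, y)) || (ends e == (y, x))].

Definition mconn (X : {set E}) (x y : V) : bool := connect (mstep X) x y.

(* X contains no cycle: no edge of X lies on a cycle of X, i.e. the
   endpoints of each edge e are not connected in X - e (a loop is a cycle). *)
Definition acyclic (X : {set E}) : Prop :=
  forall e, e \in X -> ~~ mconn (X :\ e) (ends e).1 (ends e).2.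

Definition graphic_basis (G J : {set E}) : Prop :=
  J \subset G /\ acyclic J /\ (forall e, e \in G -> e \notin J -> ~ acyclic (e |: J)).
End MultiGraph.

Section Construction.
Variables (V : finType) (adj : rel V) (r1 : V) (k : nat) (s : 'I_k -> V).

Definition mkedge (x y : V) : V * V :=
  if enum_rank x < enum_rank y then (x, y) else (y, x).

(* edge set F of H: each edge xy stored once as (x,y) with rank x < rank y *)
Definition Fset : {set V * V} :=
  [set p | adj p.1 p.2 & enum_rank p.1 < enum_rank p.2].

Definition idends (p : V * V) : V * V := p.

(* vertices of H': W plus r_2..r_k; inr i stands for r_(i+2) *)
Definition V' : finType := (V + 'I_k.-1)%type.
(* edges of H': original edges (inl) and, for i and x with r1x in F,
   the new edge r_(i+2) x (inr (i, x)) *)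
Definition E' : finType := ((V * V) + ('I_k.-1 * V))%type.

Definition Fp : {set E'} :=
  [set e : E' | match e with
                | inl p => p \in Fset
                | inr (i, x) => adj r1 x end].

Definition ends' (e : E') : V' * V' :=
  match e with
  | inl p => (inl p.1, inl p.2)
  | inr (i, x) => (inr i, inl x)
  end.

(* H'_1: identify r_1, ..., r_k (vertex set W) *)
Definition phi1 (v : V') : V := match v with inl x => x | inr _ => r1 end.
Definition ends1 (e : E') : V * V := (phi1 (ends' e).1, phi1 (ends' e).2).

(* H'_2: identify s_1, ..., s_k into one vertex, represented by None *)
Definition phi2 (v : V') : option V' :=
  match v with
  | inl x => if [exists i, s i == x] then None else Some (inl x)
  | inr i => Some (inr i)
  end.
Definition ends2 (e : E') : option V' * option V' :=
  (phi2 (ends' e).1, phi2 (ends' e).2).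

Definition basis_M1 (J : {set E'}) : Prop := graphic_basis ends1 Fp J.
Definition basis_M2 (J : {set E'}) : Prop := graphic_basis ends2 Fp J.

Definition fmap (e : E') : V * V :=
  match e with
  | inl p => p
  | inr (_, x) => mkedge r1 x
  end.
Definition gmap (J : {set E'}) : {set V * V} := fmap @: J.

Definition spanning_tree (T : {set V * V}) : Prop :=
  T \subset Fset /\ acyclic idends T /\ (forall x y, mconn idends T x y).

(* T is S-wide: every component of T - r1 contains at most one terminal *)
Definition S_wide (T : {set V * V}) : Prop :=
  forall i j : 'I_k, i != j ->
    ~~ mconn idends [set e in T | (e.1 != r1) && (e.2 != r1)] (s i) (s j).
End Construction.

(* Main.v *)
Require Import Defs.
From mathcomp Require Import all_boot zify.
Set Implicit Arguments. Unset Strict Implicit. Unset Printing Implicit Defensive.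

Lemma conn_inv (T : finType) (r : rel T) (P : T -> Prop) x y :
  (forall a b, r a b -> P a -> P b) -> connect r x y -> P x -> P y.
Proof.
move=> Hs /connectP [p Hp ->]; elim: p x Hp => [|z p IH] x //= /andP [Hxz Hp] Px.
exact: IH Hp (Hs _ _ Hxz Px).
Qed.

Section Gen.
Variables (E Vt : finType) (ends : E -> Vt * Vt).
Implicit Types (X Y G J : {set E}) (a b c x y u v w : Vt) (e : E).

Lemma mstep_sym X : symmetric (mstep ends X).
Proof.
by move=> x y; apply/existsP/existsP => [] [e /andP [He H]]; exists e; rewrite He orbC.
Qed.

Lemma mconn_sym X : symmetric (mconn ends X).
Proof. by apply: sym_connect_sym; apply: mstep_sym. Qed.

Lemma mconn_trans X a b c : mconn ends X a b -> mconn ends X b c -> mconn ends X a c.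
Proof. exact: connect_trans. Qed.

Lemma mstep_sub X Y a b : X \subset Y -> mstep ends X a b -> mstep ends Y a b.
Proof.
move=> XY /existsP [e /andP [He H]]; apply/existsP; exists e.
by rewrite H (subsetP XY _ He).
Qed.

Lemma mconn_sub X Y a b : X \subset Y -> mconn ends X a b -> mconn ends Y a b.
Proof.
move=> XY H; apply: (@conn_inv _ _ (fun w => mconn ends Y a w) a b _ H); last exact: connect0.
move=> u v /(mstep_sub XY) Huv Hu; apply: connect_trans Hu (connect1 Huv).
Qed.

Lemma mstep_edge X e u v : e \in X -> (ends e == (u, v)) || (ends e == (v, u)) ->
  mstep ends X u v.
Proof. by move=> He H; apply/existsP; exists e; rewrite He H. Qed.

Lemma basis_of G J : J \subset G -> acyclic ends J ->
  (forall e, e \in G -> mconn ends J (ends e).1 (ends e).2) -> graphic_basis ends G J.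
Proof.
move=> JG AJ HG; split=> //; split=> // e eG eJ Hac.
have := Hac e (setU11 e J); rewrite setU1K // HG //.
Qed.

Section Forest.
Variables (par : Vt -> Vt) (h : Vt -> nat).
Hypothesis Hpar : forall v, par v != v -> h (par v) < h v.
Variable ed : Vt -> E.
Hypothesis Hed : forall v, par v != v ->
  (ends (ed v) == (v, par v)) || (ends (ed v) == (par v, v)).
Let D := [set v | par v != v].

Lemma h_par_le y : h (par y) <= h y.
Proof. by case: (eqVneq (par y) y) => [->|/Hpar/ltnW]. Qed.

Lemma h_iter_le n y : h (iter n par y) <= h y.
Proof. elim: n => //= n IH; exact: leq_trans (h_par_le _) IH. Qed.

Lemma step_cases (Z : {set E}) a b : mstep ends (ed @: D :\: Z) a b ->
  exists2 w, (par w != w) /\ ed w \notin Z &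
    ((a == w) && (b == par w)) || ((a == par w) && (b == w)).
Proof.
move=> /existsP [e' /andP [He' Hab]].
move: He'; rewrite inE => /andP [He'X /imsetP [w]].
rewrite inE => Dw Ee; subst e'.
exists w; first by split.
have := Hed Dw.
by case/orP: Hab => /eqP -> /orP [] /eqP [-> ->]; rewrite !eqxx ?andbT ?orbT //=;
  rewrite ?eq_sym ?eqxx ?andbT ?orbT //.
Qed.

Lemma forest_acyclic : acyclic ends (ed @: D).
Proof.
move=> e /imsetP [c]; rewrite inE => Dc ->.
suff Hn : ~~ mconn ends (ed @: D :\ ed c) c (par c).
  by case/orP: (Hed Dc) => /eqP ->; rewrite //= mconn_sym.
apply/negP => H.
have : exists n, iter n par (par c) = c.
  apply: (@conn_inv _ _ (fun w => exists n, iter n par w = c) c) H _; last by exists 0.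
  move=> a b /step_cases [w [Dw Hw]].
  rewrite in_set1 in Hw.
  case/orP=> /andP [/eqP -> /eqP ->] [n Hn].
  - case: n Hn => [/= Hwc|n Hn]; first by rewrite Hwc eqxx in Hw.
    by exists n; rewrite -iterSr.
  - by exists n.+1; rewrite iterSr.
case=> n Hn.
have := h_iter_le n (par c); rewrite Hn => Hle.
by have := leq_ltn_trans Hle (Hpar Dc); rewrite ltnn.
Qed.

Definition rt v := iter (h v) par v.

Lemma iter_fix n v : par v = v -> iter n par v = v.
Proof. by move=> Hv; elim: n => //= n ->. Qed.

Lemma iter_stab n v : h v <= n -> par (iter n par v) = iter n par v.
Proof.
elim: n v => [|n IH] v Hv.
  by case: (eqVneq (par v) v) => // /Hpar; rewrite ltnNge (leq_trans Hv).
case: (eqVneq (par v) v) => [Hf|Hf]; first by rewrite !iter_fix.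
by rewrite iterSr; apply: IH; rewrite -ltnS (leq_trans (Hpar Hf) Hv).
Qed.

Lemma iter_ge n v : h v <= n -> iter n par v = rt v.
Proof.
move=> Hn; rewrite -(subnK Hn) iterD iter_fix //; exact: iter_stab.
Qed.

Lemma rt_fix v : par (rt v) = rt v.
Proof. exact: iter_stab. Qed.

Lemma fix_rt v : par v = v -> rt v = v.
Proof. exact: iter_fix. Qed.

Lemma rt_par v : rt (par v) = rt v.
Proof.
case: (eqVneq (par v) v) => [->//|Hf].
have Hl := Hpar Hf; rewrite /rt.
case E1 : (h v) Hl => [//|m] Hl.
by rewrite iterSr [RHS]iter_ge.
Qed.

Lemma conn_rt a b : mconn ends (ed @: D) a b -> rt a = rt b.
Proof.
move=> H; have H' : mconn ends (ed @: D :\: set0) a b by rewrite setD0.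
apply: (@conn_inv _ _ (fun w => rt a = rt w) a) H' _ => //.
move=> x y /step_cases [w _] /orP [] /andP [/eqP -> /eqP ->] ->; by rewrite rt_par.
Qed.

Lemma rt_conn v : mconn ends (ed @: D) v (rt v).
Proof.
move: {2}(h v) (leqnn (h v)) => n; elim: n v => [|n IH] v Hv.
  case: (eqVneq (par v) v) => [Hf|Hf]; first by rewrite fix_rt // /mconn connect0.
  by have := Hpar Hf; rewrite ltnNge (leq_trans Hv).
case: (eqVneq (par v) v) => [Hf|Hf]; first by rewrite fix_rt // /mconn connect0.
have Hs : mstep ends (ed @: D) v (par v).
  by apply: (mstep_edge (e := ed v)); [apply: imset_f; rewrite inE | apply: Hed].
rewrite -rt_par; apply: connect_trans (connect1 Hs) (IH _ _).
by rewrite -ltnS (leq_trans (Hpar Hf) Hv).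
Qed.

End Forest.

Section Merge.
Variables (W : finType) (phi : Vt -> W) (S : {set Vt}).
Let phie (e : E) : W * W := (phi (ends e).1, phi (ends e).2).

Lemma merge_conn X a b : mconn ends X a b -> mconn phie X (phi a) (phi b).
Proof.
move=> H; apply: (@conn_inv _ _ (fun w => mconn phie X (phi a) (phi w)) a _ _ H); last exact: connect0.
move=> x y /existsP [e /andP [He Hxy]] Hx; apply: connect_trans Hx (connect1 _).
apply/existsP; exists e; rewrite He /phie.
by case/orP: Hxy => /eqP ->; rewrite eqxx ?orbT.
Qed.

Hypothesis Hphi : forall a b, phi a = phi b -> a != b -> (a \in S) && (b \in S).

Lemma merge_acyclic X : acyclic ends X ->
  (forall a b, a \in S -> b \in S -> a != b -> ~~ mconn ends X a b) ->
  acyclic phie X.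
Proof.
move=> AX HS e He; rewrite /phie.
move: (AX e He); case E1 : (ends e) => [u v] /= Hn.
set Y := X :\ e.
have YX : Y \subset X by apply: subD1set.
have Xuv : mconn ends X u v.
  by apply: connect1; apply: (mstep_edge He); rewrite E1 eqxx.
apply/negP => H.
pose R : rel Vt := fun a b => mstep ends Y a b || (phi a == phi b).
have [b [Hb Rb]] : exists b, phi b = phi v /\ connect R u b.
  apply: (@conn_inv _ _ (fun z : W => exists b, phi b = z /\ connect R u b) (phi u) _ _ H);
    last by exists u; split=> //; apply: connect0.
  move=> y1 y2 /existsP [e' /andP [He' Hy]] [b [Hb Rb]].
  case E2 : (ends e') Hy => [a' b'] /= Hy.
  case/orP: Hy => /eqP [H1 H2].
  - exists b'; split=> //; apply: connect_trans Rb _.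
    have r1 : R b a' by rewrite /R Hb H1 eqxx orbT.
    have r2 : R a' b' by rewrite /R (mstep_edge He') // E2 eqxx.
    exact: connect_trans (connect1 r1) (connect1 r2).
  - exists a'; split=> //; apply: connect_trans Rb _.
    have r1 : R b b' by rewrite /R Hb H2 eqxx orbT.
    have r2 : R b' a' by rewrite /R (mstep_edge He') // E2 eqxx orbT.
    exact: connect_trans (connect1 r1) (connect1 r2).
pose Inv w := (mconn ends X u w -> mconn ends Y u w) /\
  (~~ mconn ends X u w -> exists2 s0, s0 \in S & mconn ends X u s0 /\ mconn ends Y u s0).
have Inv_b : Inv b.
  apply: (@conn_inv _ R Inv u _ _ Rb); last first.
    by rewrite /Inv /mconn !connect0; split.
  move=> a c /orP [Hac|/eqP Hac] [I1 I2].
  - have HacX := mstep_sub YX Hac.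
    split=> [Hc|Hc].
      have Ha : mconn ends X u a.
        by apply: connect_trans Hc (connect1 _); rewrite mstep_sym.
      exact: connect_trans (I1 Ha) (connect1 Hac).
    apply: I2; apply/negP => Ha; move/negP: Hc; apply.
    exact: connect_trans Ha (connect1 HacX).
  - case: (eqVneq a c) => [<-//|Hne].
    case/andP: (Hphi Hac Hne) => aS cS.
    case Ha : (mconn ends X u a).
      have Hc : ~~ mconn ends X u c.
        apply/negP => Hc; move/negP: (HS _ _ aS cS Hne); apply.
        by apply: mconn_trans _ Hc; rewrite mconn_sym.
      split=> [Hc'|_]; first by rewrite Hc' in Hc.
      by exists a => //; split=> //; apply: I1.
    have [s0 s0S [s0X s0Y]] := I2 (negbT Ha).
    split=> [Hc|_]; last by exists s0.
    case: (eqVneq c s0) => [->//|Hcs].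
    move/negP: (HS _ _ cS s0S Hcs); case.
    by apply: mconn_trans _ s0X; rewrite mconn_sym.
case: Inv_b => I1 I2.
case: (eqVneq b v) => [Ebv|Hbv].
  by subst b; move/negP: Hn; apply; apply: I1.
case/andP: (Hphi Hb Hbv) => bS vS.
case Hbx : (mconn ends X u b).
  move/negP: (HS _ _ bS vS Hbv); apply.
  by apply: mconn_trans _ Xuv; rewrite mconn_sym.
have [s0 s0S [s0X s0Y]] := I2 (negbT Hbx).
case: (eqVneq s0 v) => [Esv|Hsv]; first by subst s0; move/negP: Hn; apply.
move/negP: (HS _ _ s0S vS Hsv); apply.
by apply: mconn_trans _ Xuv; rewrite mconn_sym.
Qed.

End Merge.
End Gen.

Lemma mkedge_sym (V : finType) (x y : V) : x != y -> mkedge x y = mkedge y x.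
Proof.
move=> Hxy; rewrite /mkedge.
case: (ltngtP (enum_rank x) (enum_rank y)) => // /val_inj /enum_rank_inj Exy.
by rewrite Exy eqxx in Hxy.
Qed.

Lemma mkedge_in (V : finType) (x y : V) (q : V * V) :
  enum_rank q.1 < enum_rank q.2 -> (q == (x, y)) || (q == (y, x)) -> q = mkedge x y.
Proof.
rewrite /mkedge => Hq /orP [] /eqP Eq; subst q => /=; first by rewrite Hq.
by rewrite ltnNge (ltnW Hq).
Qed.

Section Main.
Variables (V : finType) (adj : rel V) (r1 : V) (k : nat) (s : 'I_k -> V).
Hypotheses (adj_sym : symmetric adj) (Hk : 2 <= k) (Hsr : forall i, s i != r1).
Variable T : {set V * V}.
Hypotheses (HT : spanning_tree adj T) (HW : S_wide r1 s T).

Let TF : T \subset Fset adj. Proof. by case: HT. Qed.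
Let Tac : acyclic (@idends V) T. Proof. by case: HT => _ []. Qed.
Let Tconn : forall x y, mconn (@idends V) T x y. Proof. by case: HT => _ []. Qed.

Definition Pd x n := [exists p : n.-tuple V, path (mstep (@idends V) T) x p && (last x p == r1)].

Lemma exPd x : exists n, Pd x n.
Proof.
have /connectP [p Hp Hl] := Tconn x r1.
exists (size p); apply/existsP; exists (in_tuple p); by rewrite /= Hp -Hl eqxx.
Qed.

Definition d x := ex_minn (exPd x).

Lemma d_min x n : Pd x n -> d x <= n.
Proof. by rewrite /d; case: ex_minnP => m _ H /H. Qed.

Lemma Pd_d x : Pd x (d x).
Proof. by rewrite /d; case: ex_minnP. Qed.

Lemma d_r1 : d r1 = 0.
Proof.
apply/eqP; rewrite -leqn0; apply: d_min; apply/existsP; exists [tuple]; by rewrite /= eqxx.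
Qed.

Lemma d0 x : d x = 0 -> x = r1.
Proof.
move=> H; have := Pd_d x; rewrite H => /existsP [t].
by rewrite tuple0 /= => /eqP.
Qed.

Definition par x := odflt x [pick y | mstep (@idends V) T x y && (d y < d x)].

Lemma par_spec x : x != r1 -> mstep (@idends V) T x (par x) && (d (par x) < d x).
Proof.
move=> Hx; rewrite /par; case: pickP => [y //|H].
have := Pd_d x; case E1 : (d x) => [|n]; first by rewrite (d0 E1) eqxx in Hx.
move=> /existsP [[[|y p] /= Hsz]] //.
case/andP => /andP [Hxy Hp] Hl.
have Hsz' : size p == n by [].
have : Pd y n by apply/existsP; exists (Tuple Hsz'); rewrite /= Hp.
move/d_min => Hd.
by have := H y; rewrite Hxy /= E1 ltnS Hd.
Qed.

Lemma par_r1 : par r1 = r1.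
Proof. by rewrite /par; case: pickP => [y /andP [_]|//]; rewrite d_r1. Qed.

Lemma Hpar_d x : par x != x -> d (par x) < d x.
Proof.
case: (eqVneq x r1) => [->|Hx]; first by rewrite par_r1 eqxx.
by case/andP: (par_spec Hx).
Qed.

Lemma par_ne x : x != r1 -> par x != x.
Proof. move/par_spec => /andP [_ H]; apply/eqP => E1; by rewrite E1 ltnn in H. Qed.

Lemma par_edge x : x != r1 -> mkedge x (par x) \in T.
Proof.
move/par_spec => /andP [/existsP [q /andP [Hq Hxq]] _].
have := subsetP TF _ Hq; rewrite inE => /andP [_ Hr].
by rewrite -(mkedge_in Hr Hxq).
Qed.

Lemma T_par q : q \in T -> exists2 a, a != r1 & q = mkedge a (par a).
Proof.
move=> Hq; have := subsetP TF _ Hq; rewrite inE; case: q Hq => a b Hq /= /andP [Hadj Hr].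
have Hab : a != b by apply/eqP => E1; subst b; rewrite ltnn in Hr.
have Eab : (a, b) = mkedge a b by rewrite /mkedge Hr.
case: (eqVneq b (par a)) => [Eb|Hb].
  exists a => //; last by rewrite -Eb.
  by apply/eqP => Ea; subst a; rewrite Eb par_r1 eqxx in Hab.
case: (eqVneq a (par b)) => [Ea|Ha].
  exists b; last by rewrite -Ea Eab mkedge_sym.
  by apply/eqP => Eb; subst b; rewrite Ea par_r1 eqxx in Hab.
exfalso; move/negP: (Tac Hq); apply => /=.
have Hall : forall w, mconn (@idends V) (T :\ (a, b)) w r1.
  move=> w; move: {2}(d w) (leqnn (d w)) => n; elim: n w => [|n IH] w Hw.
    by rewrite (d0 (_ : d w = 0)) /mconn ?connect0 //; apply/eqP; rewrite -leqn0.
  case: (eqVneq w r1) => [->|Hw1]; first by rewrite /mconn connect0.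
  have /andP [/existsP [q /andP [Hq' Hwq]] Hd] := par_spec Hw1.
  have Hdn : d (par w) <= n by rewrite -ltnS (leq_trans Hd Hw).
  apply: mconn_trans (IH _ Hdn).
  apply: connect1; apply/existsP; exists q; rewrite Hwq !inE Hq' andbT.
  rewrite andbT; apply/negP => /eqP Eq; subst q.
  by case/orP: Hwq => /eqP [E1 E2]; subst; rewrite eqxx in Hb Ha.
by apply: mconn_trans (Hall a) _; rewrite mconn_sym.
Qed.


Lemma mkedge_or (x y : V) : (mkedge x y == (x, y)) || (mkedge x y == (y, x)).
Proof. by rewrite /mkedge; case: ifP => _; rewrite eqxx ?orbT. Qed.

Definition T0 := [set e in T | (e.1 != r1) && (e.2 != r1)].
Definition pk x := [pick j : 'I_k.-1 | [exists i : 'I_k, (val i == j.+1) && mconn (@idends V) T0 (s i) x]].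

Definition par' (v : V' V k) : V' V k :=
  match v with
  | inl x => if x == r1 then inl r1 else if par x == r1 then
               (if pk x is Some j then inr j else inl r1) else inl (par x)
  | inr j => inr j
  end.
Definition h' (v : V' V k) : nat := match v with inl x => d x | inr _ => 0 end.
Definition ed (v : V' V k) : E' V k :=
  match v with
  | inl x => match par' (inl x) with inr j => inr (j, x) | inl y => inl (mkedge x y) end
  | inr j => inl (r1, r1)
  end.
Definition J := ed @: [set v | par' v != v].

Lemma par'_r1 : par' (inl r1) = inl r1.
Proof. by rewrite /= eqxx. Qed.

Lemma par'_fix v : par' v = v -> v = inl r1 \/ exists j, v = inr j.
Proof.
case: v => [x|j] /=; last by right; exists j.
case: (eqVneq x r1) => [->|Hx]; first by left.
case: (eqVneq (par x) r1) => [Hp|Hp].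
  by case: (pk x) => [j|] // [E1]; rewrite E1 eqxx in Hx.
by case => E1; move: (par_ne Hx); rewrite E1 eqxx.
Qed.

Lemma D'_inl v : par' v != v -> exists2 x, x != r1 & v = inl x.
Proof.
case: v => [x|j] /=; last by rewrite eqxx.
by case: (eqVneq x r1) => [->|Hx]; [rewrite eqxx | exists x].
Qed.

Lemma par'_inl_val x y : par' (inl x) = inl y -> x != r1 -> y = par x.
Proof.
move=> E1 Hx; move: E1; rewrite /= (negbTE Hx).
case: (eqVneq (par x) r1) => [Hp|_ [] //]; by case: (pk x) => [j|] // [<-].
Qed.

Lemma par'_inr_val x j : par' (inl x) = inr j -> par x = r1 /\ x != r1.
Proof.
rewrite /=; case: (eqVneq x r1) => // Hx; case: (eqVneq (par x) r1) => // Hp _; by split.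
Qed.

Lemma par'_ne x : x != r1 -> par' (inl x) != inl x.
Proof.
move=> Hx; apply/eqP => E1.
by have [] := par'_fix E1 => [[E2]|[j]] //; rewrite E2 eqxx in Hx.
Qed.

Lemma Hpar' v : par' v != v -> h' (par' v) < h' v.
Proof.
move=> Hv; have [x Hx Ev] := D'_inl Hv; subst v.
have Hd : 0 < d x by rewrite lt0n; apply/eqP => /d0 E1; rewrite E1 eqxx in Hx.
rewrite /= (negbTE Hx); case: (eqVneq (par x) r1) => [Hp|Hp].
  by case: (pk x) => [j|] //=; rewrite d_r1.
exact: Hpar_d (par_ne Hx).
Qed.

Lemma Hed' v : par' v != v -> (ends' (ed v) == (v, par' v)) || (ends' (ed v) == (par' v, v)).
Proof.
move=> Hv; have [x Hx Ev] := D'_inl Hv; subst v.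
rewrite /ed; case: (par' (inl x)) => [y|j] /=; last by rewrite eqxx.
by case/orP: (mkedge_or x y) => /eqP -> /=; rewrite ?eqxx ?orbT.
Qed.

Lemma fmap_ed x : x != r1 -> fmap r1 (ed (inl x)) = mkedge x (par x).
Proof.
move=> Hx; rewrite /ed; case E1 : (par' (inl x)) => [y|j] /=.
  by rewrite (par'_inl_val E1 Hx).
have [Hp _] := par'_inr_val E1; rewrite Hp mkedge_sym // eq_sym //.
Qed.

Lemma ed_Fp v : par' v != v -> ed v \in Fp adj r1 k.
Proof.
move=> Hv; have [x Hx Ev] := D'_inl Hv; subst v.
have HxT := subsetP TF _ (par_edge Hx).
rewrite /ed; case E1 : (par' (inl x)) => [y|j]; rewrite inE.
  by rewrite (par'_inl_val E1 Hx).
have [Hp _] := par'_inr_val E1.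
move: HxT; rewrite Hp inE /mkedge; case: ifP => _ /andP [H _] //.
by rewrite adj_sym.
Qed.

Lemma gmapJ : gmap r1 J = T.
Proof.
apply/setP => q; apply/imsetP/idP => [[e /imsetP [v Hv ->] ->]|Hq].
  move: Hv; rewrite inE => Hv; have [x Hx Ev] := D'_inl Hv; subst v.
  by rewrite fmap_ed // par_edge.
have [a Ha Eq] := T_par Hq.
exists (ed (inl a)); last by rewrite fmap_ed.
by apply: imset_f; rewrite inE par'_ne.
Qed.

Definition rt' := rt par' h'.

Lemma acycJ : acyclic (@ends' V k) J.
Proof. exact: (forest_acyclic Hpar' Hed'). Qed.

Lemma conn_rt' a b : mconn (@ends' V k) J a b -> rt' a = rt' b.
Proof. exact: (conn_rt Hpar' Hed'). Qed.

Lemma rt_conn' v : mconn (@ends' V k) J v (rt' v).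
Proof. exact: (rt_conn Hpar' Hed'). Qed.

Lemma rt'_fix v : rt' v = inl r1 \/ exists j, rt' v = inr j.
Proof. apply: par'_fix; exact: (rt_fix Hpar'). Qed.

Lemma rt'_par v : rt' (par' v) = rt' v.
Proof. exact: (rt_par Hpar'). Qed.

Lemma rt_comp n x : d x <= n -> x != r1 -> forall i : 'I_k,
  mconn (@idends V) T0 (s i) x ->
  (val i = 0 -> rt' (inl x) = inl r1) /\
  (forall j : 'I_k.-1, val i = j.+1 -> rt' (inl x) = inr j).
Proof.
elim: n x => [|n IH] x Hd Hx i Hi.
  have E1 : d x = 0 by apply/eqP; rewrite -leqn0.
  by rewrite (d0 E1) eqxx in Hx.
rewrite -rt'_par.
case: (eqVneq (par x) r1) => Hp.
  have Hpx : par' (inl x) = (if pk x is Some j then inr j else inl r1).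
    by rewrite /= (negbTE Hx) Hp eqxx.
  have fixp : rt' (par' (inl x)) = par' (inl x).
    by apply: fix_rt; rewrite Hpx; case: (pk x) => [j|] //=; rewrite eqxx.
  rewrite fixp Hpx /pk; case: pickP => [j /existsP [i' /andP [/eqP Hi' Hc]]|Hn].
    have Eii : i' = i.
      case: (eqVneq i' i) => // Hne; move/negP: (HW Hne); case.
      by apply: mconn_trans Hc _; rewrite mconn_sym.
    subst i'; split => [H0|j' Hj']; first by rewrite H0 in Hi'.
    by congr inr; apply: val_inj; move: Hi'; rewrite Hj' => [[]].
  split => [//|j Hj]; exfalso.
  have Hex : [exists i0 : 'I_k, (val i0 == j.+1) && mconn (@idends V) T0 (s i0) x].
    by apply/existsP; exists i; rewrite Hj eqxx Hi.
  by move: (Hn j); rewrite /= Hex.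
have Hpx : par' (inl x) = inl (par x) by rewrite /= (negbTE Hx) (negbTE Hp).
rewrite Hpx; apply: IH => //.
  by rewrite -ltnS (leq_trans (Hpar_d (par_ne Hx)) Hd).
apply: mconn_trans Hi (connect1 _).
have Hq := par_edge Hx.
apply/existsP; exists (mkedge x (par x)); rewrite (mkedge_or x (par x)) andbT.
rewrite inE Hq /=.
by case/orP: (mkedge_or x (par x)) => /eqP -> /=; rewrite Hx Hp.
Qed.

Lemma rt_term (i : 'I_k) :
  (val i = 0 /\ rt' (inl (s i)) = inl r1) \/
  (exists j : 'I_k.-1, val i = j.+1 /\ rt' (inl (s i)) = inr j).
Proof.
have Hc : mconn (@idends V) T0 (s i) (s i) by apply: connect0.
have H := rt_comp (leqnn _) (Hsr i) Hc.
case Ei : (nat_of_ord i) => [|m]; first by left; split=> //; apply: H.1.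
have Hm : m < k.-1 by have := ltn_ord i; rewrite Ei; lia.
right; exists (Ordinal Hm); split=> //; exact: H.2.
Qed.


Definition S1 := [set v : V' V k | par' v == v].
Definition S2 := [set v : V' V k | [exists i, v == inl (s i)]].

Lemma Hphi1 a b : phi1 r1 a = phi1 r1 b -> a != b -> (a \in S1) && (b \in S1).
Proof.
rewrite !inE; case: a => [x|j]; case: b => [y|j'] //= E1 Hne.
- by subst y; rewrite eqxx in Hne.
- by subst x; rewrite !eqxx.
- by subst y; rewrite !eqxx.
- by rewrite !eqxx.
Qed.

Lemma HS1 a b : a \in S1 -> b \in S1 -> a != b -> ~~ mconn (@ends' V k) J a b.
Proof.
rewrite !inE => /eqP Ha /eqP Hb Hne; apply/negP => /conn_rt'.
rewrite /rt' !fix_rt //; by move=> E1; rewrite E1 eqxx in Hne.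
Qed.

Lemma Hphi2 a b : phi2 s a = phi2 s b -> a != b -> (a \in S2) && (b \in S2).
Proof.
rewrite !inE; case: a => [x|j]; case: b => [y|j'] /=.
- case: (boolP [exists i, s i == x]) => [/existsP [i /eqP Hi]|Hx];
  case: (boolP [exists i, s i == y]) => [/existsP [i' /eqP Hi']|Hy] //.
    move=> _ _; apply/andP; split; apply/existsP; [exists i|exists i'];
    by rewrite ?Hi ?Hi'.
  by move=> [->]; rewrite eqxx.
- by case: ifP.
- by case: ifP.
- by move=> [->]; rewrite eqxx.
Qed.

Lemma ineq_rt (i i' : 'I_k) : i != i' -> rt' (inl (s i)) != rt' (inl (s i')).
Proof.
move=> Hne; apply/eqP => E1; move/eqP: Hne; apply; apply: val_inj.
case: (rt_term i) => [[Hi Ei]|[j [Hi Ei]]];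
case: (rt_term i') => [[Hi' Ei']|[j' [Hi' Ei']]]; rewrite Ei Ei' in E1 => //.
- by rewrite Hi Hi'.
- by case: E1 => E2; rewrite Hi Hi' E2.
Qed.

Lemma HS2 a b : a \in S2 -> b \in S2 -> a != b -> ~~ mconn (@ends' V k) J a b.
Proof.
rewrite !inE => /existsP [i /eqP ->] /existsP [i' /eqP ->] Hne.
have Hii : i != i' by apply: contraNneq Hne => ->.
by apply/negP => /conn_rt'/eqP; apply/negP; apply: ineq_rt.
Qed.

Lemma JFp : J \subset Fp adj r1 k.
Proof. by apply/subsetP => e /imsetP [v]; rewrite inE => Hv ->; apply: ed_Fp. Qed.

Lemma M1 : basis_M1 adj r1 J.
Proof.
apply: basis_of JFp _ _; first exact: (merge_acyclic Hphi1 acycJ HS1).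
have Hall : forall v : V' V k, mconn (@ends1 V r1 k) J (phi1 r1 v) r1.
  move=> v; have := merge_conn (@phi1 V r1 k) (rt_conn' v).
  by case: (rt'_fix v) => [->|[j ->]].
move=> e _; rewrite /ends1; apply: mconn_trans (Hall _) _; rewrite mconn_sym; exact: Hall.
Qed.

Let i0 : 'I_k := Ordinal (ltnW Hk).

Lemma M2 : basis_M2 adj r1 s J.
Proof.
apply: basis_of JFp _ _; first exact: (merge_acyclic Hphi2 acycJ HS2).
have Hs : forall i, phi2 s (inl (s i)) = None.
  by move=> i /=; rewrite (_ : [exists i0, s i0 == s i] = true) //; apply/existsP; exists i.
have Hall : forall v : V' V k, mconn (ends2 s) J (phi2 s v) None.
  move=> v.
  have [i Hi] : exists i, rt' (inl (s i)) = rt' v.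
    case: (rt'_fix v) => [E1|[j E1]].
      exists i0; rewrite E1; case: (rt_term i0) => [[_ ->]//|[j [Hj _]]].
      by move: Hj; rewrite /i0.
    have Hj : j.+1 < k by have := ltn_ord j; lia.
    exists (Ordinal Hj); rewrite E1; case: (rt_term (Ordinal Hj)) => [[//]|[j' [Hj' ->]]].
    by congr inr; apply: val_inj; case: Hj'.
  rewrite -(Hs i); apply: merge_conn.
  apply: mconn_trans (rt_conn' v) _; rewrite -Hi mconn_sym; exact: rt_conn'.
move=> e _; rewrite /ends2; apply: mconn_trans (Hall _) _; rewrite mconn_sym; exact: Hall.
Qed.

End Main.

Unset Implicit Arguments.
Theorem lemma8 (V : finType) (adj : rel V) (r1 : V) (k : nat) (s : 'I_k -> V) :
  symmetric adj -> irreflexive adj ->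
  2 <= k -> injective s -> (forall i, s i != r1) ->
  (forall i j, ~~ adj (s i) (s j)) ->
  forall T : {set V * V}, spanning_tree adj T -> S_wide r1 s T ->
  exists J : {set E' V k},
    basis_M1 adj r1 J /\ basis_M2 adj r1 s J /\ gmap r1 J = T.
Proof.
move=> Hsym _ Hk _ Hsr _ T HT HW.
exists (J r1 s HT); split; first exact: M1.
split; first exact: M2.
exact: gmapJ.
Qed.
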